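(* Every blocking set of $\operatorname{PG}(2,q)$ with at most $2q$ points contains exactly one minimal blocking set.
   Context: $q$ is a prime power and $\operatorname{PG}(2,q)$ is the incidence structure of the points and lines of $\mathbb{P}^2$ defined over $\mathbb{F}_q$. A blocking set is a set of points of $\operatorname{PG}(2,q)$ meeting every line; it is minimal if no proper subset of it is a blocking set. *)

(* Defs.v *)
(* PG(2,q) over a finite field F with q = #|F|. *)
From mathcomp Require Import all_boot all_order all_algebra.
Set Implicit Arguments. Unset Strict Implicit. Unset Printing Implicit Defensive.
Import GRing.Theory.
Local Open Scope ring_scope.

(* A nonzero vector of F^3 is normalized if its first nonzero coordinate is 1.
   Each 1-dimensional subspace of F^3 has exactly one normalized spanning vector,
   so normalized vectors represent the points (and, dually, the lines) of PG(2,q). *)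
Definition normalized (F : finFieldType) (v : 'rV[F]_3) : bool :=
  [exists i : 'I_3, (v 0 i == 1) && [forall j : 'I_3, (j < i)%N ==> (v 0 j == 0)]].

Definition pg_point (F : finFieldType) := {v : 'rV[F]_3 | normalized v}.
Definition pg_line (F : finFieldType) := {v : 'rV[F]_3 | normalized v}.

Definition incident (F : finFieldType) (p : pg_point F) (l : pg_line F) : bool :=
  \sum_(i < 3) (val p) 0 i * (val l) 0 i == 0.

Definition blocking_set (F : finFieldType) (B : {set pg_point F}) : Prop :=
  forall l : pg_line F, exists2 p, p \in B & incident p l.

Definition minimal_blocking_set (F : finFieldType) (B : {set pg_point F}) : Prop :=
  blocking_set B /\ forall C : {set pg_point F}, C \proper B -> ~ blocking_set C.

(* Main.v *)
Require Import Defs.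
From mathcomp Require Import all_boot all_order all_algebra.
From mathcomp Require Import finfield ring zify.
Set Implicit Arguments. Unset Strict Implicit. Unset Printing Implicit Defensive.
Import GRing.Theory.
Local Open Scope ring_scope.

Section Alg.
Variable F : finFieldType.

Lemma char_card : (#|F|%:R : F) = 0.
Proof.
have E : \sum_(x : F) x = \sum_(x : F) (x + 1).
  exact: (reindex_inj (can_inj (addrK 1))).
move: E; rewrite big_split /= sumr_const => /eqP.
by rewrite -subr_eq0 opprD addrA subrr sub0r oppr_eq0 => /eqP.
Qed.

Lemma sum_pow0 e : (e < #|F|.-1)%N -> \sum_(a : F) a ^+ e = 0.
Proof.
case: e => [|e] he.
  by under eq_bigr do rewrite expr0; rewrite sumr_const char_card.
have [c [c0 ce]] : exists c : F, c != 0 /\ c ^+ e.+1 != 1.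

  case: (boolP [exists c : F, (c != 0) && (c ^+ e.+1 != 1)]).
    by case/existsP=> c /andP[]; exists c.
  rewrite negb_exists => /forallP hc.
  pose rs := [seq x <- enum F | x != 0].
  have := @max_poly_roots _ ('X^(e.+1) - 1) rs.
  rewrite size_Xn_sub_1 // -size_poly_eq0 size_Xn_sub_1 //.
  rewrite filter_uniq ?enum_uniq // size_filter.
  have -> : count (fun x : F => x != 0) (enum F) = #|F|.-1.
    rewrite -(cardC1 0) -size_filter cardE /enum_mem; congr size; elim: (Finite.enum F) => //= x s ->; rewrite !inE; by case: (x != 0).
  have -> : all (root ('X^(e.+1) - 1)) rs.
    apply/allP => x; rewrite mem_filter => /andP[x0 _].
    move: (hc x); rewrite x0 /= negbK => /eqP hx.
    by rewrite /root !hornerE hx subrr.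
  by move=> /(_ isT isT isT); rewrite ltnS leqNgt he.
set S := \sum_(a : F) a ^+ e.+1.
have : S = c ^+ e.+1 * S.
  rewrite {1}/S (reindex_inj (mulfI c0)) /S mulr_sumr.
  by apply: eq_bigr => a _; rewrite exprMn.
move/eqP; rewrite -subr_eq0 -{1}[S]mul1r -mulrBl mulf_eq0 subr_eq0 eq_sym (negbTE ce) /=.
by move/eqP.
Qed.

Definition dotw (w : {ffun 'I_3 -> F}) (x : 'rV[F]_3) := \sum_(j < 3) w j * x 0 j.

Lemma sum_prod_lin (vs : seq 'rV[F]_3) : (size vs < 3 * #|F|.-1)%N ->
  \sum_(w : {ffun 'I_3 -> F}) \prod_(v <- vs) dotw w v = 0.
Proof.
move=> hs; set m := size vs.
rewrite (eq_bigr (fun w : {ffun 'I_3 -> F} => \sum_(f : {ffun 'I_m -> 'I_3})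
   \prod_(i < m) (w (f i) * (nth 0 vs i) 0 (f i)))); last first.
  by move=> w _; rewrite (big_nth 0) big_mkord /dotw; exact: bigA_distr_bigA.
rewrite exchange_big /= big1 // => f _.
under eq_bigr do rewrite big_split /=.
rewrite -mulr_suml; apply/eqP; rewrite mulf_eq0; apply/orP; left; apply/eqP.
have e_def : forall w : {ffun 'I_3 -> F}, \prod_(i < m) w (f i)
    = \prod_(j < 3) w j ^+ #|[pred i | f i == j]|.
  move=> w; rewrite (partition_big f predT) //=; apply: eq_bigr => j _.
  rewrite -prodr_const; apply: eq_big => [i|i /eqP ->] //; by rewrite inE.
under eq_bigr do rewrite e_def.
rewrite -(bigA_distr_bigA (fun (j : 'I_3) (a : F) => a ^+ #|[pred i | f i == j]|)) /=.
have sum_e : (\sum_(j < 3) #|[pred i | f i == j]| = m)%N.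
  rewrite -[RHS]card_ord -sum1_card (partition_big f predT) //=.
  by apply: eq_bigr => j _; rewrite sum1_card.
have [j hj] : exists j : 'I_3, (#|[pred i | f i == j]| < #|F|.-1)%N.
  case: (boolP [exists j : 'I_3, (#|[pred i | f i == j]| < #|F|.-1)%N]).
    by case/existsP=> j hj; exists j.
  rewrite negb_exists => /forallP hj.
  have : (\sum_(j < 3) #|F|.-1 <= \sum_(j < 3) #|[pred i | f i == j]|)%N.
    by apply: leq_sum => j _; move: (hj j); rewrite -leqNgt.
  by rewrite sum_e sum_nat_const card_ord leqNgt hs.
by rewrite (bigD1 j) //= sum_pow0 // mul0r.
Qed.

Definition i0 : 'I_3 := @Ordinal 3 0 isT.
Definition i1 : 'I_3 := @Ordinal 3 1 isT.
Definition i2 : 'I_3 := @Ordinal 3 2 isT.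

Lemma ord3 (j : 'I_3) : j = i0 \/ j = i1 \/ j = i2.
Proof.
case: j => [[|[|[|n]]] hn]; [left|right;left|right;right|by []]; exact: val_inj.
Qed.

Lemma sum3 (f : 'I_3 -> F) : \sum_(j < 3) f j = f i0 + f i1 + f i2.
Proof.
rewrite !big_ord_recl big_ord0 addr0 addrA.
by congr (f _ + f _ + f _); apply: val_inj.
Qed.

Lemma normP (v : 'rV[F]_3) : normalized v <->
  (v 0 i0 = 1 \/ (v 0 i0 = 0 /\ v 0 i1 = 1) \/ (v 0 i0 = 0 /\ v 0 i1 = 0 /\ v 0 i2 = 1)).
Proof.
split.
  case/existsP=> i /andP[/eqP hi /forallP hj].
  have h0 := hj i0; have h1 := hj i1.
  case: (ord3 i) => [->|[->|->]] in hi h0 h1 *.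
  - by left.
  - by right; left; split => //; apply/eqP.
  - by right; right; split; [apply/eqP|split => //; apply/eqP].
case=> [h|[[h0 h1]|[h0 [h1 h2]]]]; apply/existsP.
- by exists i0; rewrite h eqxx /=; apply/forallP => j.
- exists i1; rewrite h1 eqxx /=; apply/forallP => j.
  by case: (ord3 j) => [->|[->|->]] //=; rewrite h0.
- exists i2; rewrite h2 eqxx /=; apply/forallP => j.
  by case: (ord3 j) => [->|[->|->]] //=; rewrite ?h0 ?h1.
Qed.


Definition cross (p q : 'rV[F]_3) : {ffun 'I_3 -> F} :=
  [ffun j => if j == i0 then p 0 i1 * q 0 i2 - p 0 i2 * q 0 i1
             else if j == i1 then p 0 i2 * q 0 i0 - p 0 i0 * q 0 i2
             else p 0 i0 * q 0 i1 - p 0 i1 * q 0 i0].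

Lemma cross0 p q : cross p q i0 = p 0 i1 * q 0 i2 - p 0 i2 * q 0 i1.
Proof. by rewrite ffunE. Qed.
Lemma cross1 p q : cross p q i1 = p 0 i2 * q 0 i0 - p 0 i0 * q 0 i2.
Proof. by rewrite ffunE. Qed.
Lemma cross2 p q : cross p q i2 = p 0 i0 * q 0 i1 - p 0 i1 * q 0 i0.
Proof. by rewrite ffunE. Qed.

Lemma row3P (p q : 'rV[F]_3) : p 0 i0 = q 0 i0 -> p 0 i1 = q 0 i1 -> p 0 i2 = q 0 i2 -> p = q.
Proof.
move=> h0 h1 h2; apply/rowP => j.
by case: (ord3 j) => [->|[->|->]].
Qed.

Lemma cross_neq0 (p q : 'rV[F]_3) : normalized p -> normalized q -> p != q ->
  exists j, cross p q j != 0.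
Proof.
move=> /normP hp /normP hq npq.
case: (boolP [exists j, cross p q j != 0]); first by case/existsP => j; exists j.
rewrite negb_exists => /forallP hc; exfalso; move/negP: npq; apply.
have c0 := hc i0; have c1 := hc i1; have c2 := hc i2.
rewrite negbK cross0 in c0; rewrite negbK cross1 in c1; rewrite negbK cross2 in c2.
apply/eqP.
case: hp => [p0|[[p0 p1]|[p0 [p1 p2]]]]; case: hq => [q0|[[q0 q1]|[q0 [q1 q2]]]];
  rewrite ?p0 ?p1 ?p2 ?q0 ?q1 ?q2 ?mul1r ?mulr1 ?mul0r ?mulr0 ?subr0 ?sub0r ?oppr_eq0 ?oner_eq0 in c0 c1 c2 * => //.
all: move: c0 c1 c2; rewrite ?subr_eq0 => /eqP c0 /eqP c1 /eqP c2.
all: apply: row3P; rewrite ?p0 ?p1 ?p2 ?q0 ?q1 ?q2 //.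
Qed.


Lemma dotwE w x : dotw w x = w i0 * x 0 i0 + w i1 * x 0 i1 + w i2 * x 0 i2.
Proof. by rewrite /dotw sum3. Qed.

Lemma cross_par (w : {ffun 'I_3 -> F}) p q : dotw w p = 0 -> dotw w q = 0 ->
  forall j k, w k * cross p q j = w j * cross p q k.
Proof.
rewrite !dotwE => hp hq.
have e1 : w i1 * cross p q i0 - w i0 * cross p q i1
   = q 0 i2 * (w i0 * p 0 i0 + w i1 * p 0 i1 + w i2 * p 0 i2)
   - p 0 i2 * (w i0 * q 0 i0 + w i1 * q 0 i1 + w i2 * q 0 i2).
  by rewrite cross0 cross1; ring.
have e2 : w i2 * cross p q i1 - w i1 * cross p q i2
   = q 0 i0 * (w i0 * p 0 i0 + w i1 * p 0 i1 + w i2 * p 0 i2)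
   - p 0 i0 * (w i0 * q 0 i0 + w i1 * q 0 i1 + w i2 * q 0 i2).
  by rewrite cross1 cross2; ring.
have e3 : w i0 * cross p q i2 - w i2 * cross p q i0
   = q 0 i1 * (w i0 * p 0 i0 + w i1 * p 0 i1 + w i2 * p 0 i2)
   - p 0 i1 * (w i0 * q 0 i0 + w i1 * q 0 i1 + w i2 * q 0 i2).
  by rewrite cross2 cross0; ring.
rewrite hp hq !mulr0 subrr in e1 e2 e3.
move/eqP: e1; rewrite subr_eq0 => /eqP e1.
move/eqP: e2; rewrite subr_eq0 => /eqP e2.
move/eqP: e3; rewrite subr_eq0 => /eqP e3.
move=> j k; case: (ord3 j) => [->|[->|->]]; case: (ord3 k) => [->|[->|->]] //;
  by rewrite ?e1 ?e2 ?e3.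
Qed.

Lemma normalize (w : {ffun 'I_3 -> F}) : (exists j, w j != 0) ->
  exists l : pg_line F, forall x : pg_point F, incident x l = (dotw w (val x) == 0).
Proof.
move=> hw.
pose mu := if w i0 != 0 then (w i0)^-1 else if w i1 != 0 then (w i1)^-1 else (w i2)^-1.
have mu0 : mu != 0.
  rewrite /mu; case: ifP => h0; first by rewrite invr_eq0.
  case: ifP => h1; first by rewrite invr_eq0.
  rewrite invr_eq0; case: hw => j; case: (ord3 j) => [->|[->|->]] //.
  - by rewrite h0.
  - by rewrite h1.
pose v := \row_(j < 3) (mu * w j).
have nv : normalized v.
  apply/normP; rewrite !mxE /mu.
  case: ifP => h0; first by left; rewrite mulVf.
  move/negbFE/eqP: h0 => h0; rewrite h0 mulr0.
  case: ifP => h1; first by right; left; rewrite mulVf.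
  move/negbFE/eqP: h1 => h1; rewrite h1 mulr0.
  right; right; do 2 split => //; rewrite mulVf //.
  by case: hw => j; case: (ord3 j) => [->|[->|->]]; rewrite ?h0 ?h1 ?eqxx.
exists (exist _ v nv) => x; rewrite /incident /= /dotw.
have -> : \sum_(i < 3) val x 0 i * v 0 i = mu * \sum_(j < 3) w j * val x 0 j.
  by rewrite mulr_sumr; apply: eq_bigr => i _; rewrite /v mxE; ring.
by rewrite mulf_eq0 (negbTE mu0).
Qed.


Lemma unit_pow (x : F) : x != 0 -> x ^+ #|F|.-1 = 1.
Proof.
move=> x0; apply: (mulfI x0); rewrite mulr1 -exprS prednK ?expf_card //.
exact: ltnW (finNzRing_gt1 F).
Qed.

Lemma predq_neq0 : ((#|F|.-1)%:R : F) != 0.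
Proof.
move: char_card; rewrite -{1}(prednK (ltnW (finNzRing_gt1 F))) -addn1 natrD.
by move/eqP; rewrite addr_eq0 => /eqP ->; rewrite oppr_eq0 oner_eq0.
Qed.

Lemma sum_pow_m : \sum_(a : F) a ^+ (2 * #|F|.-1) = (#|F|.-1)%:R.
Proof.
have q2 := finNzRing_gt1 F.
have qq : (0 < #|F|.-1)%N by rewrite -ltnS prednK // ltnW.
have qpred : #|F| = (#|F|.-1).+1 by rewrite prednK // ltnW.
rewrite (bigD1 0) //= expr0n.
have -> : (2 * #|F|.-1 == 0)%N = false by apply/eqP; lia.
rewrite add0r (eq_bigr (fun _ => 1)); last first.
  by move=> a a0; rewrite mulnC exprM unit_pow // expr1n.
by rewrite sumr_const cardC1.
Qed.

Lemma geo (C : {set pg_point F}) (P Q : pg_point F) :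
  P != Q -> P \in C -> Q \in C ->
  blocking_set (C :\ P) -> blocking_set (C :\ Q) -> ~ blocking_set (C :\ P :\ Q) ->
  (#|C| <= 2 * #|F|)%N -> False.
Proof.
move=> nPQ PC QC bP bQ nb hC.
have q2 := finNzRing_gt1 F.
have qq : (0 < #|F|.-1)%N by rewrite -ltnS prednK // ltnW.
have qpred : #|F| = (#|F|.-1).+1 by rewrite prednK // ltnW.
set D := C :\ P :\ Q.
have [l0 hl0] : exists l0 : pg_line F, forall x, x \in D -> ~~ incident x l0.
  case: (boolP [exists l0 : pg_line F, [forall x in D, ~~ incident x l0]]).
    by case/existsP => l0 /forall_inP h; exists l0.
  rewrite negb_exists => /forallP h; exfalso; apply: nb => l.
  move: (h l); rewrite negb_forall_in => /existsP [x /andP[xD]]; rewrite negbK => ix.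
  by exists x.
have iQ : incident Q l0.
  case: (bP l0) => x; rewrite !inE => /andP[xP xC] ix.
  case: (eqVneq x Q) => [<-//|xQ].
  by move: (hl0 x); rewrite !inE xQ xP xC ix => /(_ isT).
have iP : incident P l0.
  case: (bQ l0) => x; rewrite !inE => /andP[xQ xC] ix.
  case: (eqVneq x P) => [<-//|xP].
  by move: (hl0 x); rewrite !inE xQ xP xC ix => /(_ isT).
have npq : val P != val Q by apply: contra nPQ => /eqP /val_inj ->.
have [j0 cj0] := cross_neq0 (valP P) (valP Q) npq.
set c := cross (val P) (val Q) in cj0 *.
have par : forall w, dotw w (val P) = 0 -> dotw w (val Q) = 0 ->
    forall k, w k = w j0 / c j0 * c k.
  move=> w hp hq k.
  by rewrite mulrAC -(cross_par hp hq j0 k) mulfK.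
have dotl0 : forall x : pg_point F, x \in D -> dotw c (val x) != 0.
  pose l0w := [ffun k => val l0 0 k].
  have hp0 : dotw l0w (val P) = 0.
    move: iP; rewrite /incident => /eqP hh; rewrite -hh /dotw.
    by apply: eq_bigr => i _; rewrite ffunE mulrC.
  have hq0 : dotw l0w (val Q) = 0.
    move: iQ; rewrite /incident => /eqP hh; rewrite -hh /dotw.
    by apply: eq_bigr => i _; rewrite ffunE mulrC.
  move=> x xD; move: (hl0 x xD); rewrite /incident.
  have -> : \sum_(i<3) val x 0 i * val l0 0 i = (val l0 0 j0 / c j0) * dotw c (val x).
    rewrite /dotw mulr_sumr; apply: eq_bigr => i _.
    have hi : val l0 0 i = val l0 0 j0 / c j0 * c i.
      by move: (par l0w hp0 hq0 i); rewrite !ffunE; apply.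
    rewrite hi; ring.
  by rewrite mulf_eq0 negb_or => /andP[_ ->].
pose e : 'rV[F]_3 := \row_k (k == j0)%:R.
have dote : forall w, dotw w e = w j0.
  move=> w; rewrite /dotw (bigD1 j0) //= /e mxE eqxx mulr1 big1 ?addr0 //.
  by move=> k hk; rewrite mxE (negbTE hk) mulr0.
have cD : (#|D| + 2 = #|C|)%N.
  by rewrite (cardsD1 P C) PC (cardsD1 Q (C :\ P)) !inE eq_sym nPQ QC /D /= !add1n addn2.
pose k := (2 * #|F|.-1 - #|D|)%N.
pose vs := map val (enum D) ++ nseq k e.
have svs : size vs = (2 * #|F|.-1)%N.
  rewrite /vs size_cat size_map -cardE size_nseq /k.
  have hD : (#|D| <= 2 * #|F|.-1)%N.
    by move: hC; rewrite -cD {1}qpred mulnSr leq_add2r.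
  by rewrite subnKC.
pose h w := \prod_(v <- vs) dotw w v.
have S1 : \sum_w h w = 0 by apply: sum_prod_lin; rewrite svs; lia.
pose scal (a : F) : {ffun 'I_3 -> F} := [ffun k => a * c k].
have S2 : forall w, h w != 0 -> w = scal (w j0 / c j0).
  move=> w; rewrite /h prodf_seq_neq0 => /allP hw.
  have hD : forall x, x \in D -> dotw w (val x) != 0.
    move=> x xD; apply: (hw (val x)).
    by rewrite mem_cat map_f // mem_enum.
  have dz : forall P' : pg_point F, (forall j, w j = 0) -> dotw w (val P') = 0.
    by move=> P' hz; rewrite /dotw big1 // => i _; rewrite hz mul0r.
  have wq : dotw w (val Q) = 0.
    case: (boolP [exists j, w j != 0]) => [/existsP hw'|]; last first.
      by rewrite negb_exists => /forallP hz; apply: dz => j; move: (hz j); rewrite negbK => /eqP.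
    have [l hl] := normalize hw'.
    case: (bP l) => x; rewrite !inE => /andP [xP xC]; rewrite hl => /eqP dx.
    case: (eqVneq x Q) => [<- //|xQ].
    by move: (hD x); rewrite !inE xQ xP xC dx eqxx => /(_ isT).
  have wp : dotw w (val P) = 0.
    case: (boolP [exists j, w j != 0]) => [/existsP hw'|]; last first.
      by rewrite negb_exists => /forallP hz; apply: dz => j; move: (hz j); rewrite negbK => /eqP.
    have [l hl] := normalize hw'.
    case: (bQ l) => x; rewrite !inE => /andP [xQ xC]; rewrite hl => /eqP dx.
    case: (eqVneq x P) => [<- //|xP].
    by move: (hD x); rewrite !inE xQ xP xC dx eqxx => /(_ isT).
  by apply/ffunP => i; rewrite ffunE; apply: par.
have S3 : forall a, h (scal a) = a ^+ (2 * #|F|.-1) * h c.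
  move=> a.
  have gen : forall s, \prod_(v <- s) dotw (scal a) v = a ^+ size s * \prod_(v <- s) dotw c v.
    elim => [|v s IH]; first by rewrite !big_nil expr0 mulr1.
    rewrite !big_cons IH /= exprS.
    have -> : dotw (scal a) v = a * dotw c v.
      by rewrite /dotw mulr_sumr; apply: eq_bigr => i _; rewrite ffunE mulrA.
    ring.
  by rewrite /h gen svs.
have S4 : h c != 0.
  rewrite /h prodf_seq_neq0; apply/allP => v; rewrite mem_cat => /orP[|].
    by case/mapP => x; rewrite mem_enum => xD ->; apply: dotl0.
  by move/nseqP => [-> _]; rewrite dote.
have S5 : \sum_w h w = \sum_(a : F) h (scal a).
  rewrite (bigID (fun w => w \in scal @: [set: F])) /=.
  rewrite [X in _ + X]big1 ?addr0; last first.
    move=> w hw; case: (eqVneq (h w) 0) => // /S2 hw'.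
    by move: hw; rewrite hw' imset_f // inE.
  rewrite big_imset /=; last first.
    move=> a b _ _ /ffunP /(_ j0) hh; apply: (mulIf cj0); move: hh; rewrite !ffunE; apply.
  by apply: eq_bigl => a; rewrite inE.
move: S1; rewrite S5; under eq_bigr do rewrite S3.
rewrite -mulr_suml sum_pow_m => /eqP; rewrite mulf_eq0 (negbTE predq_neq0) (negbTE S4).
by [].
Qed.


Lemma block_sub (A A' : {set pg_point F}) : A \subset A' -> blocking_set A -> blocking_set A'.
Proof.
move=> sA bA l; case: (bA l) => p pA ip; exists p => //; exact: (subsetP sA).
Qed.

Definition blockingb (A : {set pg_point F}) :=
  [forall l : pg_line F, [exists p in A, incident p l]].

Lemma blockingP A : reflect (blocking_set A) (blockingb A).
Proof.
apply: (iffP forallP) => [h l|h l].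
  by case/exists_inP: (h l) => p pA ip; exists p.
by case: (h l) => p pA ip; apply/exists_inP; exists p.
Qed.

Lemma exists_min (A : {set pg_point F}) : blocking_set A ->
  exists M : {set pg_point F}, M \subset A /\ minimal_blocking_set M.
Proof.
have : forall n (A : {set pg_point F}), (#|A| < n)%N -> blocking_set A ->
    exists M : {set pg_point F}, M \subset A /\ minimal_blocking_set M.
  elim=> [//|n IH] A' hn bA.
  case: (boolP [exists C : {set pg_point F}, (C \proper A') && blockingb C]).
    case/existsP => C /andP[pC /blockingP bC].
    have hC : (#|C| < n)%N by have := proper_card pC; lia.
    have [M [sM mM]] := IH C hC bC.
    by exists M; split => //; apply: subset_trans sM (proper_sub pC).
  rewrite negb_exists => /forallP hA.
  exists A'; split => //; split => // C pC bC.
  by move: (hA C); rewrite pC /=; move/blockingP: bC => ->.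
by move=> h; apply: (h #|A|.+1).
Qed.

Lemma no_two n (C : {set pg_point F}) : (#|C| < n)%N -> (#|C| <= 2 * #|F|)%N ->
  forall M1 M2 : {set pg_point F}, M1 \subset C -> M2 \subset C ->
  minimal_blocking_set M1 -> minimal_blocking_set M2 -> M1 = M2.
Proof.
elim: n C => [//|n IH] C hn hC M1 M2 s1 s2 [b1 m1] [b2 m2].
case: (eqVneq M1 M2) => // nM.
have n12 : ~~ (M1 \subset M2).
  apply/negP => s12; apply: (m2 M1) => //; by rewrite properEneq nM.
have n21 : ~~ (M2 \subset M1).
  apply/negP => s21; apply: (m1 M2) => //; by rewrite properEneq eq_sym nM.
case/subsetPn: n12 => P P1 P2.
case/subsetPn: n21 => Q Q2 Q1.
have PC : P \in C by apply: (subsetP s1).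
have QC : Q \in C by apply: (subsetP s2).
have nPQ : P != Q by apply: contraNneq Q1 => <-.
have s2P : M2 \subset C :\ P.
  by apply/subsetP => x x2; rewrite !inE (subsetP s2) // andbT; apply: contraNneq P2 => <-.
have s1Q : M1 \subset C :\ Q.
  by apply/subsetP => x x1; rewrite !inE (subsetP s1) // andbT; apply: contraNneq Q1 => <-.
have cP : (#|C :\ P| < n)%N by move: hn; rewrite (cardsD1 P C) PC add1n ltnS.
have cQ : (#|C :\ Q| < n)%N by move: hn; rewrite (cardsD1 Q C) QC add1n ltnS.
have cP' : (#|C :\ P| <= 2 * #|F|)%N by apply: leq_trans hC; apply: subset_leq_card; apply: subsetDl.
have cQ' : (#|C :\ Q| <= 2 * #|F|)%N by apply: leq_trans hC; apply: subset_leq_card; apply: subsetDl.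
exfalso; apply: (geo nPQ PC QC (block_sub s2P b2) (block_sub s1Q b1) _ hC) => bPQ.
have [N [sN mN]] := exists_min bPQ.
have sNP : N \subset C :\ P by apply: subset_trans sN _; apply: subsetDl.
have sNQ : N \subset C :\ Q.
  apply/subsetP => x /(subsetP sN); rewrite !inE => /andP[-> /andP[_ ->]] //.
have e2 := IH _ cP cP' _ _ s2P sNP (conj b2 m2) mN.
have e1 := IH _ cQ cQ' _ _ s1Q sNQ (conj b1 m1) mN.
by move/eqP: nM; apply; rewrite e1 e2.
Qed.

End Alg.

Local Close Scope ring_scope.

Theorem mainTheorem14 (F : finFieldType) (B : {set pg_point F}) :
  blocking_set B -> (#|B| <= 2 * #|F|)%N ->
  exists! M : {set pg_point F}, M \subset B /\ minimal_blocking_set M.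
Proof.
move=> bB hB.
have [M [sM mM]] := exists_min bB.
exists M; split => // M' [sM' mM'].
exact: (@no_two _ #|B|.+1 B (ltnSn _) hB M M' sM sM' mM mM').
Qed.
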